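(* Let $\mathcal{C}=(\mathcal{T},\mathcal{I},\mathcal{R})$ be an extraction context with thresholds \textit{minsupp} and \textit{minbond}. Then $\mathcal{RCPR}=\mathcal{CRCP}\cup\mathcal{MRCP}$ is a perfect cover of $\mathcal{RCP}$: it is an exact concise representation of $\mathcal{RCP}$ and its size never exceeds that of $\mathcal{RCP}$, i.e. $|\mathcal{RCPR}|\le|\mathcal{RCP}|$ for every extraction context and all values of \textit{minsupp} and \textit{minbond}.
   Context: An extraction context is a triple $\mathcal{C}=(\mathcal{T},\mathcal{I},\mathcal{R})$ with $\mathcal{T}$ a finite set of transactions, $\mathcal{I}$ a finite set of items and $\mathcal{R}\subseteq\mathcal{T}\times\mathcal{I}$. For a pattern $I\subseteq\mathcal{I}$: $\mathit{Supp}(\wedge I)=|\{t:\forall i\in I,(t,i)\in\mathcal{R}\}|$, $\mathit{Supp}(\vee I)=|\{t:\exists i\in I,(t,i)\in\mathcal{R}\}|$, and for nonempty $I$, $\mathit{bond}(I)=\mathit{Supp}(\wedge I)/\mathit{Supp}(\vee I)$ (with $\mathit{bond}(\emptyset)=+\infty$ by convention). $\mathcal{RCP}=\{I\subseteq\mathcal{I}:\mathit{Supp}(\wedge I)<\textit{minsupp},\ \mathit{bond}(I)\ge\textit{minbond}\}$. $\mathcal{CRCP}=\{I\in\mathcal{RCP}:\forall I_1\supsetneq I,\ \mathit{bond}(I)>\mathit{bond}(I_1)\}$; $\mathcal{MRCP}=\{I\in\mathcal{RCP}:\forall I_1\subsetneq I,\ \mathit{bond}(I)<\mathit{bond}(I_1)\}$.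 A family $\mathcal{S}\subseteq\mathcal{RCP}$, with each $J\in\mathcal{S}$ recorded together with $\mathit{Supp}(\wedge J)$ and $\mathit{bond}(J)$, is an exact concise representation of $\mathcal{RCP}$ if, for every pattern $I\subseteq\mathcal{I}$, the recorded data alone suffice to decide whether $I\in\mathcal{RCP}$ and, when $I\in\mathcal{RCP}$, to determine exactly $\mathit{Supp}(\wedge I)$ and $\mathit{bond}(I)$. *)

(* Defs.v *)
From mathcomp Require Import all_boot all_order all_algebra.
Set Implicit Arguments. Unset Strict Implicit. Unset Printing Implicit Defensive.
Import Order.TTheory GRing.Theory Num.Theory.
Local Open Scope ring_scope.

Section Context.
Variables (F : realFieldType) (Item : finType).

(* Extended bond values: None stands for +infinity (bond of the empty pattern). *)
Definition bond_ge (b : option F) (m : F) : bool :=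
  match b with None => true | Some r => m <= r end.
Definition bond_gt (b1 b2 : option F) : bool :=
  match b1, b2 with
  | None, None => false
  | None, Some _ => true
  | Some _, None => false
  | Some x, Some y => y < x
  end.

Variable Trans : finType.
Variable Rel : Trans -> Item -> bool.

Definition suppAnd (X : {set Item}) : nat :=
  #|[set t | [forall i in X, Rel t i]]|.
Definition suppOr (X : {set Item}) : nat :=
  #|[set t | [exists i in X, Rel t i]]|.
Definition bond (X : {set Item}) : option F :=
  if X == set0 then None
  else Some ((suppAnd X)%:R / (suppOr X)%:R).

Variables (minsupp : nat) (minbond : F).

Definition RCP : {set {set Item}} :=
  [set X | (suppAnd X < minsupp)%N && bond_ge (bond X) minbond].
Definition CRCP : {set {set Item}} :=
  [set X in RCP | [forall Y : {set Item}, (X \proper Y) ==> bond_gt (bond X) (bond Y)]].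
Definition MRCP : {set {set Item}} :=
  [set X in RCP | [forall Y : {set Item}, (Y \proper X) ==> bond_gt (bond Y) (bond X)]].
Definition RCPR : {set {set Item}} := CRCP :|: MRCP.

Definition record (S : {set {set Item}}) : {ffun {set Item} -> option (nat * option F)} :=
  [ffun J => if J \in S then Some (suppAnd J, bond J) else None].

End Context.

(* S assigns to every extraction context (over the item set Item, with the fixed
   thresholds) a family of patterns. *)
Definition exact_concise_rep (F : realFieldType) (Item : finType)
  (minsupp : nat) (minbond : F)
  (S : forall Trans : finType, (Trans -> Item -> bool) -> {set {set Item}}) : Prop :=
  (forall (Trans : finType) (Rel : Trans -> Item -> bool),
      S Trans Rel \subset @RCP F Item Trans Rel minsupp minbond) /\
  exists decode : {ffun {set Item} -> option (nat * option F)} -> {set Item} ->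
                  option (nat * option F),
    forall (Trans : finType) (Rel : Trans -> Item -> bool) (X : {set Item}),
      decode (@record F Item Trans Rel (S Trans Rel)) X =
      if X \in @RCP F Item Trans Rel minsupp minbond then Some (suppAnd Rel X, @bond F Item Trans Rel X) else None.

(* Main.v *)
Require Import Defs.
From mathcomp Require Import all_boot all_order all_algebra.
From mathcomp Require Import zify.
Import Order.TTheory GRing.Theory Num.Theory.
Set Implicit Arguments. Unset Strict Implicit.
Local Open Scope ring_scope.
Section S.
Variables (F : realFieldType) (Item : finType).
Lemma opt_antisym (a b : option F) : ~~ bond_gt a b -> ~~ bond_gt b a -> a = b.
Proof. case: a b => [x|] [y|] //=; rewrite -!leNgt => h1 h2. by rewrite (@le_anti _ _ x y) ?h1 ?h2. Qed.
Lemma opt_ge (a b : option F) m : bond_ge a m -> ~~ bond_gt a b -> bond_ge b m.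
Proof. case: a b => [x|] [y|] //=; rewrite -!leNgt => h1 h2; exact: le_trans h1 h2. Qed.
Lemma opt_lt (a b : option F) : ~~ bond_gt a b -> a != b -> bond_gt b a.
Proof. case: a b => [x|] [y|] //=; rewrite -!leNgt lt_neqAle => h1 h2. by rewrite h1 andbT; apply: contra h2 => /eqP->. Qed.
Lemma fr (a a' o o' : nat) : (a' <= a)%N -> (o <= o')%N -> (0 < o)%N ->
  (a'%:R / o'%:R <= a%:R / o%:R :> F).
Proof.
move=> h1 h2 h3. have h4 : (0 < o')%N by lia.
rewrite ler_pdivrMr ?ltr0n // mulrAC ler_pdivlMr ?ltr0n // -!natrM ler_nat. nia.
Qed.
Lemma fe (a a' o o' : nat) : (0 < o)%N -> (0 < o')%N ->
  (a'%:R / o'%:R = a%:R / o%:R :> F) -> a' * o = a * o'.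
Proof.
move=> h3 h4 /eqP; rewrite eqr_div ?pnatr_eq0 -?lt0n // -!natrM eqr_nat => /eqP. lia.
Qed.
Variables (Trans : finType) (Rel : Trans -> Item -> bool).
Local Notation sA := (suppAnd Rel).
Local Notation sO := (suppOr Rel).
Local Notation bd := (@bond F Item Trans Rel).

Lemma andOr (X : {set Item}) : X != set0 -> (sA X <= sO X)%N.
Proof.
case/set0Pn => x hx; apply: subset_leq_card; apply/subsetP => t.
rewrite !inE => /forallP h; apply/existsP; exists x; rewrite hx; exact: (implyP (h x)).
Qed.
Lemma andAnti (X Y : {set Item}) : X \subset Y -> (sA Y <= sA X)%N.
Proof.
move=> s; apply: subset_leq_card; apply/subsetP => t.
rewrite !inE => /forallP h; apply/forallP => i; apply/implyP => hi.
exact: (implyP (h i) (subsetP s _ hi)).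
Qed.
Lemma orMono (X Y : {set Item}) : X \subset Y -> (sO X <= sO Y)%N.
Proof.
move=> s; apply: subset_leq_card; apply/subsetP => t.
rewrite !inE => /existsP [i /andP[hi hr]]; apply/existsP; exists i; by rewrite (subsetP s _ hi).
Qed.
Lemma bondAnti (X Y : {set Item}) : X \subset Y -> ~~ bond_gt (bd Y) (bd X).
Proof.
move=> s; rewrite /bond.
case: (eqVneq Y set0) => [eY|nY].
  by move: s; rewrite eY subset0 => /eqP ->; rewrite eqxx.
case: (eqVneq X set0) => [eX|nX] //=.
rewrite -leNgt.
have h1 := andAnti s; have h2 := orMono s; have h3 := andOr nX.
have [o0|opos] := posnP (sO X).
  have a0 : sA X = 0%N by lia.
  have a'0 : sA Y = 0%N by lia.
  by rewrite a0 a'0 !mul0r.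
exact: fr.
Qed.
Lemma bondEqSupp (X Y : {set Item}) : X \subset Y -> bd X = bd Y -> sA X = sA Y.
Proof.
move=> s; rewrite /bond.
case: (eqVneq X set0) => [->|nX].
  by case: ifP => // /eqP ->.
have nY : Y != set0 by apply: contraNneq nX => e; move: s; rewrite e subset0.
rewrite (negbTE nY) => -[e].
have h1 := andAnti s; have h2 := orMono s; have h3 := andOr nX.
have [o0|opos] := posnP (sO X); first by lia.
have := @fe _ _ _ _ opos (leq_trans opos h2) (esym e).
nia.
Qed.
End S.
Section D.
Variables (F : realFieldType) (Item : finType).
Definition isrec (r : {ffun {set Item} -> option (nat * option F)}) J :=
  if r J is Some _ then true else false.
Definition rbnd (r : {ffun {set Item} -> option (nat * option F)}) J :=
  if r J is Some p then p.2 else None.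
Definition rsup (r : {ffun {set Item} -> option (nat * option F)}) J :=
  if r J is Some p then p.1 else 0%N.
Definition decode (r : {ffun {set Item} -> option (nat * option F)}) (X : {set Item}) :=
  if [exists M, isrec r M && (M \subset X)] then
    if [pick C | isrec r C && (X \subset C) &&
          [forall C', (isrec r C' && (X \subset C')) ==> ~~ bond_gt (rbnd r C') (rbnd r C)]]
    is Some C then Some (rsup r C, rbnd r C) else None
  else None.

Variables (Trans : finType) (Rel : Trans -> Item -> bool) (minsupp : nat) (minbond : F).
Local Notation sA := (suppAnd Rel).
Local Notation bd := (@bond F Item Trans Rel).
Local Notation RCP := (@RCP F Item Trans Rel minsupp minbond).
Local Notation RCPR := (@RCPR F Item Trans Rel minsupp minbond).
Local Notation BA := (@bondAnti F Item Trans Rel _ _).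
Local Notation BE := (@bondEqSupp F Item Trans Rel _ _).
Local Notation r := (@record F Item Trans Rel RCPR).

Lemma isrecE (J : {set Item}) : isrec r J = (J \in RCPR).
Proof. by rewrite /isrec ffunE; case: ifP. Qed.
Lemma rbndE (J : {set Item}) : J \in RCPR -> rbnd r J = bd J.
Proof. by rewrite /rbnd ffunE => ->. Qed.
Lemma rsupE (J : {set Item}) : J \in RCPR -> rsup r J = sA J.
Proof. by rewrite /rsup ffunE => ->. Qed.
Lemma RCPR_sub : RCPR \subset RCP.
Proof. by apply/subsetP => J; rewrite !inE => /orP[] /andP[]. Qed.

Lemma between (M X C : {set Item}) : M \subset X -> X \subset C -> M \in RCP -> C \in RCP -> X \in RCP.
Proof.
move=> s1 s2; rewrite !inE => /andP[m1 m2] /andP[c1 c2].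
rewrite (leq_ltn_trans (andAnti Rel s1) m1) /=.
exact: (@opt_ge F _ _ _ c2 (BA s2)).
Qed.

Lemma closure (X : {set Item}) : X \in RCP -> exists2 C, C \in RCPR & (X \subset C) && (bd C == bd X).
Proof.
move=> hX.
have P0 : (X \subset X) && (bd X == bd X) by rewrite subxx eqxx.
case: (@arg_maxnP _ X (fun Y : {set Item} => (X \subset Y) && (bd Y == bd X)) (fun Y : {set Item} => #|Y|) P0) => C /andP[sC eC] mx.
exists C; last by rewrite sC eC.
have CR : C \in RCP.
  move: hX; rewrite !inE => /andP[h1 h2].
  rewrite (leq_ltn_trans (andAnti Rel sC) h1) /= (eqP eC) //.
rewrite inE; apply/orP; left; rewrite inE CR /=.
apply/forallP => Z; apply/implyP => pZ.
apply: (@opt_lt F); first exact: BA (proper_sub pZ).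
apply/negP => /eqP e.
have sZ : X \subset Z by apply: subset_trans sC (proper_sub pZ).
have := mx Z; rewrite sZ e (eqP eC) eqxx => /(_ isT).
by move=> h; have := proper_card pZ; rewrite ltnNge (h : (#|Z| <= #|C|)%N).
Qed.

Lemma minimal (X : {set Item}) : X \in RCP -> exists2 M, M \in RCPR & M \subset X.
Proof.
move=> hX.
have P0 : (X \subset X) && (bd X == bd X) by rewrite subxx eqxx.
case: (@arg_minnP _ X (fun Y : {set Item} => (Y \subset X) && (bd Y == bd X)) (fun Y : {set Item} => #|Y|) P0) => M /andP[sM eM] mn.
exists M => //.
have MR : M \in RCP.
  move: hX; rewrite !inE => /andP[h1 h2].
  rewrite (BE sM (eqP eM)) h1 /= (eqP eM) //.
rewrite inE; apply/orP; right; rewrite inE MR /=.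
apply/forallP => Z; apply/implyP => pZ.
apply: (@opt_lt F); first exact: BA (proper_sub pZ).
apply/negP => /eqP e.
have sZ : Z \subset X by apply: subset_trans (proper_sub pZ) sM.
have := mn Z; rewrite sZ -e (eqP eM) eqxx => /(_ isT).
by rewrite leqNgt proper_card.
Qed.

Lemma decodeP (X : {set Item}) : decode r X =
  if X \in RCP then Some (sA X, bd X) else None.
Proof.
rewrite /decode.
case: (boolP (X \in RCP)) => hX.
  have [M MR sM] := minimal hX.
  have [C CR /andP[sC eC]] := closure hX.
  have -> : [exists M, isrec r M && (M \subset X)].
    by apply/existsP; exists M; rewrite isrecE MR.
  case: pickP => [C0 /andP[/andP[rec0 sub0] all0] | none].
    rewrite isrecE in rec0.
    have e0 : bd C0 = bd X.
      apply: (@opt_antisym F); first exact: BA sub0.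
      have := implyP (forallP all0 C); rewrite isrecE CR sC => /(_ isT).
      by rewrite !rbndE // (eqP eC).
    by rewrite rsupE // rbndE // e0 (BE sub0 (esym e0)).
  have := none C; rewrite isrecE CR sC /=.
  move/negP; case; apply/forallP => C'; apply/implyP => /andP[].
  rewrite isrecE => R' s'; rewrite !rbndE // (eqP eC); exact: BA s'.
case: ifP => // /existsP [M /andP[]]; rewrite isrecE => MR sM.
case: pickP => // C0 /andP[/andP[]]; rewrite isrecE => CR sC _.
case/negP: hX; apply: (between sM sC).
  exact: (subsetP RCPR_sub).
exact: (subsetP RCPR_sub).
Qed.
End D.

Close Scope ring_scope.
Theorem mainTheorem5 (F : realFieldType) (Item : finType)
  (minsupp : nat) (minbond : F) :
  @exact_concise_rep F Item minsupp minbond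
    (fun (Trans : finType) (Rel : Trans -> Item -> bool) => @RCPR F Item Trans Rel minsupp minbond) /\
  (forall (Trans : finType) (Rel : Trans -> Item -> bool),
     #|@RCPR F Item Trans Rel minsupp minbond| <= #|@RCP F Item Trans Rel minsupp minbond|).
Proof.
split; last by move=> Trans Rel; apply: subset_leq_card; exact: RCPR_sub.
split; first by move=> Trans Rel; exact: RCPR_sub.
exists (@decode F Item) => Trans Rel X; exact: decodeP.
Qed.
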